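(* Let $m,n\in\mathbb{Z}_{>0}$ with $m\ge n$, let $\psi:\mathcal{G}^{(m,n)}\to\mathbb{C}$ be a Whittaker function with $\psi(I_{m+n-1})\psi(J_{m+n-1})\ne0$, and let $W'=\mathrm{Ind}_{\mathcal{G}^{(m,n)}}^{\mathcal{G}^{(m,0)}}\mathbb{C}w_\psi$. Let $w\in W'\setminus\mathbb{C}w_\psi$ and let $\deg(w)=(\mathbf{j},\mathbf{i})$. Then: (1) If $\mathbf{j}\neq\mathbf{0}$ and $r=\min\{k: j_k\neq0\}$, then $\deg\big((H_{m+n-1-r}-\psi(H_{m+n-1-r}))w\big)=(\mathbf{j}-\epsilon_r,\mathbf{i})$. (2) If $\mathbf{j}=\mathbf{0}$, $\mathbf{i}\ne\mathbf{0}$ and $s=\max\{k: i_k\ne0\}$, then $\deg\big((H_{m+n-1-s}-\psi(H_{m+n-1-s}))w\big)=(\mathbf{0},\mathbf{i}-\epsilon_s)$ or $\deg\big((L_{m+n-1-s}-\psi(L_{m+n-1-s}))w\big)=(\mathbf{0},\mathbf{i}-\epsilon_s)$.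
   Context: $\mathcal{G}$ is the complex Lie algebra with basis $\{L_n,H_n,I_n,J_n,\mathbf{c}_1,\mathbf{c}_2,\mathbf{c}_3: n\in\mathbb{Z}\}$ whose brackets of basis elements are $[L_m,L_n]=(n-m)L_{m+n}+\frac{m^3-m}{12}\delta_{m+n,0}\mathbf{c}_1$, $[L_m,H_n]=nH_{m+n}+m^2\delta_{m+n,0}\mathbf{c}_2$, $[H_m,H_n]=m\delta_{m+n,0}\mathbf{c}_3$, $[L_m,I_n]=(n-m)I_{m+n}$, $[L_m,J_n]=(n-m)J_{m+n}$, $[H_m,I_n]=I_{m+n}$, $[H_m,J_n]=-J_{m+n}$ (and antisymmetric counterparts), all other brackets of basis elements zero. For $m,n\ge0$, $\mathcal{G}^{(m,n)}=\sum_{i\ge0}(\mathbb{C}L_{m+i}+\mathbb{C}H_{m+i}+\mathbb{C}I_{n+i}+\mathbb{C}J_{n+i})+\sum_{k=1}^3\mathbb{C}\mathbf{c}_k$. A Whittaker function is a Lie homomorphism $\psi:\mathcal{G}^{(m,n)}\to\mathbb{C}$, $\mathbb{C}w_\psi$ the corresponding one-dimensional module, and $W'=\mathcal{U}(\mathcal{G}^{(m,0)})\otimes_{\mathcal{U}(\mathcal{G}^{(m,n)})}\mathbb{C}w_\psi$. Orders and degree: for $l\in\mathbb{Z}_{>0}$, elements of $\mathbb{N}^l$ are written $\mathbf{i}=(i_{l-1},\dots,i_1,i_0)$; $\epsilon_k$ has $1$ in the position of index $k$ and $0$ elsewhere; the weight is $\mathbf{w}(\mathbf{i})=\sum_{k=0}^{l-1}(l-k)i_k$.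 On $\mathbb{N}^l$, $\mathbf{i}\succ\mathbf{j}$ iff there is $k$ with $i_k>j_k$ and $i_s=j_s$ for all $s<k$. On $\mathbb{N}^l\times\mathbb{N}^l$ define the total order $(\mathbf{j},\mathbf{i})\succ(\mathbf{j}',\mathbf{i}')$ iff either $\mathbf{w}(\mathbf{j})+\mathbf{w}(\mathbf{i})>\mathbf{w}(\mathbf{j}')+\mathbf{w}(\mathbf{i}')$, or these weights are equal and $\mathbf{i}\succ\mathbf{i}'$, or the weights are equal, $\mathbf{i}=\mathbf{i}'$ and $\mathbf{j}\succ\mathbf{j}'$. Take $l=n$ and for $\mathbf{j},\mathbf{i}\in\mathbb{N}^n$ set $J^{\mathbf{j}}I^{\mathbf{i}}=J_{n-1}^{j_{n-1}}\cdots J_0^{j_0}I_{n-1}^{i_{n-1}}\cdots I_0^{i_0}$. By PBW every $w\in W'$ is uniquely $\sum_{\mathbf{j},\mathbf{i}}J^{\mathbf{j}}I^{\mathbf{i}}w_{\mathbf{j},\mathbf{i}}$ with $w_{\mathbf{j},\mathbf{i}}\in\mathbb{C}w_\psi$, finitely many nonzero; for $w\ne0$, $\deg(w)$ is the $\succ$-maximal $(\mathbf{j},\mathbf{i})$ with $w_{\mathbf{j},\mathbf{i}}\ne0$. *)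

(* Defs.v *)
From HB Require Import structures.
From mathcomp Require Import all_boot all_order all_algebra.
From mathcomp Require Import complex.
From mathcomp Require Import Rstruct.
Set Implicit Arguments. Unset Strict Implicit. Unset Printing Implicit Defensive.
Import Order.TTheory GRing.Theory Num.Theory.
Local Open Scope ring_scope.

Definition CC : numClosedFieldType := (Rdefinitions.R)[i].

(* Labels of the basis {L_n, H_n, I_n, J_n, c1, c2, c3 : n in Z} of G. *)
Inductive gbasis : Type :=
  | gL of int | gH of int | gI of int | gJ of int | gc1 | gc2 | gc3.

Definition delta0 (k : int) : CC := if k == 0 then 1 else 0.

(* Bracket [x, y] of two basis elements, as a finite linear combination
   (list of (coefficient, basis element)). *)
Definition gbr (x y : gbasis) : seq (CC * gbasis) :=
  match x, y with
  | gL a, gL b => [:: ((b - a)%:~R, gL (a + b));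
                      ((a ^+ 3 - a)%:~R / 12%:R * delta0 (a + b), gc1)]
  | gL a, gH b => [:: (b%:~R, gH (a + b)); ((a ^+ 2)%:~R * delta0 (a + b), gc2)]
  | gH b, gL a => [:: (- b%:~R, gH (a + b)); (- (a ^+ 2)%:~R * delta0 (a + b), gc2)]
  | gH a, gH b => [:: (a%:~R * delta0 (a + b), gc3)]
  | gL a, gI b => [:: ((b - a)%:~R, gI (a + b))]
  | gI b, gL a => [:: (- (b - a)%:~R, gI (a + b))]
  | gL a, gJ b => [:: ((b - a)%:~R, gJ (a + b))]
  | gJ b, gL a => [:: (- (b - a)%:~R, gJ (a + b))]
  | gH a, gI b => [:: (1, gI (a + b))]
  | gI b, gH a => [:: (-1, gI (a + b))]
  | gH a, gJ b => [:: (-1, gJ (a + b))]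
  | gJ b, gH a => [:: (1, gJ (a + b))]
  | _, _ => [::]
  end.

(* Membership of a basis element in G^(m,n)  (G^(m,0) for n = 0). *)
Definition inG (m n : nat) (x : gbasis) : bool :=
  match x with
  | gL k | gH k => (Posz m <= k)%R
  | gI k | gJ k => (Posz n <= k)%R
  | _ => true
  end.

Definition is_rep_m0 (m : nat) (V : lmodType CC) (rho : gbasis -> {linear V -> V}) :=
  forall x y, inG m 0 x -> inG m 0 y -> forall v : V,
    rho x (rho y v) - rho y (rho x v) = \sum_(p <- gbr x y) p.1 *: rho p.2 v.

(* A Whittaker function: a Lie homomorphism G^(m,n) -> C, given on the basis
   (its linear extension kills all brackets of basis elements). *)
Definition whittaker (m n : nat) (psi : gbasis -> CC) :=
  forall x y, inG m n x -> inG m n y -> \sum_(p <- gbr x y) p.1 * psi p.2 = 0.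

(* Multi-indices in N^n : i = (i_{n-1}, ..., i_0), component k is i k. *)
Definition midx (n : nat) := {ffun 'I_n -> nat}.

Definition mweight n (i : midx n) : nat := (\sum_(k < n) (n - k) * i k)%N.

Definition mlex_gt n (i j : midx n) : Prop :=
  exists k : 'I_n, (j k < i k)%N /\ forall s : 'I_n, (s < k)%N -> i s = j s.

Definition pair_gt n (p q : midx n * midx n) : Prop :=
  (mweight q.1 + mweight q.2 < mweight p.1 + mweight p.2)%N
  \/ (mweight p.1 + mweight p.2 = mweight q.1 + mweight q.2 /\ mlex_gt p.2 q.2)
  \/ (mweight p.1 + mweight p.2 = mweight q.1 + mweight q.2 /\ p.2 = q.2
      /\ mlex_gt p.1 q.1).

Definition meps n (r : 'I_n) : midx n := [ffun k => nat_of_bool (k == r)].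
Definition msub n (i e : midx n) : midx n := [ffun k => (i k - e k)%N].
Definition mzero n : midx n := [ffun => 0%N].

(* J^j I^i w = J_{n-1}^{j_{n-1}} ... J_0^{j_0} I_{n-1}^{i_{n-1}} ... I_0^{i_0} w *)
Definition monoI n (V : lmodType CC) (rho : gbasis -> {linear V -> V})
  (i : midx n) (w : V) : V :=
  foldl (fun acc (k : 'I_n) => iter (i k) (rho (gI (Posz k))) acc) w (enum 'I_n).
Definition monoJ n (V : lmodType CC) (rho : gbasis -> {linear V -> V})
  (j : midx n) (w : V) : V :=
  foldl (fun acc (k : 'I_n) => iter (j k) (rho (gJ (Posz k))) acc) w (enum 'I_n).
Definition mono n (V : lmodType CC) (rho : gbasis -> {linear V -> V})
  (w0 : V) (p : midx n * midx n) : V := monoJ rho p.1 (monoI rho p.2 w0).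

Definition pbw_rep n (V : lmodType CC) (rho : gbasis -> {linear V -> V}) (w0 : V)
  (v : V) (c : midx n * midx n -> CC) (s : seq (midx n * midx n)) : Prop :=
  [/\ uniq s, (forall p, c p != 0 -> p \in s) &
      v = \sum_(p <- s) c p *: mono rho w0 p].

Definition pbw_basis n (V : lmodType CC) (rho : gbasis -> {linear V -> V}) (w0 : V) :=
  (forall v : V, exists c s, @pbw_rep n V rho w0 v c s) /\
  (forall v c s c' s', @pbw_rep n V rho w0 v c s -> @pbw_rep n V rho w0 v c' s' ->
     forall p, c p = c' p).

Definition is_deg n (V : lmodType CC) (rho : gbasis -> {linear V -> V}) (w0 : V)
  (v : V) (d : midx n * midx n) : Prop :=
  exists c s, @pbw_rep n V rho w0 v c s /\ c d != 0 /\
    forall p, c p != 0 -> p <> d -> pair_gt d p.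

(* Main.v *)
Require Import Defs.
From HB Require Import structures.
From mathcomp Require Import all_boot all_order all_algebra.
From mathcomp Require Import complex.
From mathcomp Require Import Rstruct.
From mathcomp Require Import zify ring.
From Stdlib Require Import Classical.
Import Order.TTheory GRing.Theory Num.Theory.
Local Open Scope ring_scope.

Set Implicit Arguments. Unset Strict Implicit.
Section Ops.
Variables (n : nat) (V : lmodType CC).

Definition Fop (X : 'I_n -> {linear V -> V}) (e : midx n) (ks : seq 'I_n) (v : V) : V :=
  foldl (fun acc k => iter (e k) (X k) acc) v ks.

Lemma iter_lin (f : {linear V -> V}) e (a : CC) u v :
  iter e f (a *: u + v) = a *: iter e f u + iter e f v.
Proof. elim: e => [|e IH] //=. by rewrite IH linearD linearZ. Qed.

Lemma Fop_lin X e ks (a : CC) u v :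
  Fop X e ks (a *: u + v) = a *: Fop X e ks u + Fop X e ks v.
Proof. elim: ks u v => [|k ks IH] u v //=. by rewrite /Fop /= iter_lin -IH. Qed.

Lemma Fop0 X e ks : Fop X e ks 0 = 0.
Proof.
elim: ks => [|k ks IH] //=; rewrite /Fop /=.
have -> : iter (e k) (X k) 0 = 0 by elim: (e k) => //= ? ->; rewrite linear0.
exact: IH.
Qed.

Lemma FopD X e ks u v : Fop X e ks (u + v) = Fop X e ks u + Fop X e ks v.
Proof. by rewrite -[u in LHS]scale1r Fop_lin scale1r. Qed.

Lemma FopZ X e ks (a : CC) u : Fop X e ks (a *: u) = a *: Fop X e ks u.
Proof. by rewrite -[a *: u]addr0 Fop_lin Fop0 addr0. Qed.

Lemma Fop_sum X e ks (I : Type) (r : seq I) (g : I -> V) :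
  Fop X e ks (\sum_(x <- r) g x) = \sum_(x <- r) Fop X e ks (g x).
Proof.
elim: r => [|x r IH]; first by rewrite !big_nil Fop0.
by rewrite !big_cons FopD IH.
Qed.

Lemma Fop_eq X (e e' : midx n) ks v : (forall k, k \in ks -> e k = e' k) ->
  Fop X e ks v = Fop X e' ks v.
Proof.
elim: ks v => [|k ks IH] v //= H.
rewrite /Fop /= H ?mem_head //. apply: IH => k' hk'. apply: H.
by rewrite in_cons hk' orbT.
Qed.

Variables (T : V -> V) (G : V -> Prop).

Lemma iter_T (f : {linear V -> V}) (c : CC) :
  (forall v, G v -> G (f v)) ->
  (forall v, G v -> T (f v) = f (T v) + c *: v) ->
  forall e v, G v -> T (iter e f v) = iter e f (T v) + (e%:R * c) *: iter e.-1 f v.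
Proof.
move=> hG hT; elim=> [|e IH] v Gv /=; first by rewrite mul0r scale0r addr0.
have Gi : G (iter e f v) by elim: e {IH} => //= e IH; apply: hG.
rewrite hT // IH // linearD linearZ.
case: e {IH Gi} => [|e] /=.
  by rewrite !mul0r scale0r addr0 mul1r.
by rewrite [(e.+2)%:R]mulrSr mulrDl mul1r scalerDl addrA.
Qed.

Lemma iterG (f : {linear V -> V}) : (forall v, G v -> G (f v)) ->
  forall e v, G v -> G (iter e f v).
Proof. by move=> hG; elim=> //= e IH v Gv; apply: hG; apply: IH. Qed.

Lemma FopG (X : 'I_n -> {linear V -> V}) e ks v : (forall k v, G v -> G (X k v)) -> G v -> G (Fop X e ks v).
Proof.
move=> hG; elim: ks v => [|k ks IH] v //= Gv.
rewrite /Fop /=; apply: IH; apply: iterG => // u; exact: hG.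
Qed.

Lemma Fop_T (X : 'I_n -> {linear V -> V}) (cf : 'I_n -> CC) :
  (forall k v, G v -> G (X k v)) ->
  (forall k v, G v -> T (X k v) = X k (T v) + cf k *: v) ->
  forall e ks v, uniq ks -> G v ->
  T (Fop X e ks v) = Fop X e ks (T v) +
     \sum_(k <- ks) ((e k)%:R * cf k) *: Fop X (msub e (meps k)) ks v.
Proof.
move=> hG hT e; elim=> [|k ks IH] v /= Uks Gv.
  by rewrite big_nil addr0.
case/andP: Uks => kks Uks.
have Gu : G (iter (e k) (X k) v) by apply: iterG => // u; exact: hG.
rewrite /Fop /= -/(Fop X e ks _) IH // (@iter_T (X k) (cf k) (hG k) (hT k)) // FopD FopZ big_cons.
rewrite -/(Fop X e ks _) -addrA; congr (_ + _); congr (_ + _).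
  rewrite -/(Fop X (msub e (meps k)) ks _) (@Fop_eq X _ e).
    by rewrite ffunE /meps ffunE eqxx subn1.
  move=> k' hk'; rewrite ffunE /meps ffunE.
  have /negbTE -> : k' != k by apply: contraNneq kks => <-.
  by rewrite subn0.
apply: eq_big_seq => k' hk'.
rewrite -/(Fop X (msub e (meps k')) ks _); congr (_ *: Fop _ _ _ _).
rewrite ffunE /meps ffunE.
have /negbTE -> : k != k' by apply: contraNneq kks => ->.
by rewrite subn0.
Qed.

End Ops.

Local Close Scope ring_scope.
Set Implicit Arguments. Unset Strict Implicit.
Notation W p := (mweight p.1 + mweight p.2)%N.

Section Comb.
Variable n : nat.
Implicit Types (a b e : midx n) (p q : midx n * midx n).


Lemma msubE e f k : msub e f k = (e k - f k)%N.
Proof. by rewrite ffunE. Qed.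
Lemma mepsE (r k : 'I_n) : meps r k = (k == r) :> nat.
Proof. by rewrite ffunE. Qed.

Lemma mweight_le a b : (forall t, a t <= b t)%N ->
  mweight b = (mweight a + mweight (msub b a))%N.
Proof.
move=> h; rewrite /mweight -big_split /=; apply: eq_bigr => t _.
by rewrite msubE -mulnDr subnKC.
Qed.

Lemma mweight_eps (k : 'I_n) : mweight (meps k) = (n - k)%N.
Proof.
rewrite /mweight (bigD1 k) //= big1 ?addn0 ?mepsE ?eqxx ?muln1 //.
by move=> t tk; rewrite mepsE (negbTE tk) muln0.
Qed.

Lemma mweight_sub {e} {k : 'I_n} : e k != 0%N ->
  mweight e = (mweight (msub e (meps k)) + (n - k))%N.
Proof.
move=> ek; rewrite (@mweight_le (msub e (meps k)) e).
  congr (_ + _)%N; rewrite -mweight_eps; congr mweight; apply/ffunP => t.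
  rewrite !msubE mepsE; case: eqP => [->|_]; lia.
by move=> t; rewrite msubE leq_subr.
Qed.

Lemma mweight0 e : mweight e = 0%N -> e = mzero n.
Proof.
move=> h; apply/ffunP => t; rewrite ffunE.
move: h; rewrite /mweight (bigD1 t) //=.
have := ltn_ord t; nia.
Qed.

Lemma mlex_irr a : ~ mlex_gt a a.
Proof. by case=> k []; rewrite ltnn. Qed.

Lemma pair_irr p : ~ pair_gt p p.
Proof.
case=> [|[[_ /mlex_irr]|[_ [_ /mlex_irr]]]] //; by rewrite ltnn.
Qed.

Lemma pair_W p q : pair_gt p q -> (W q <= W p)%N.
Proof. case=> [/ltnW|[[e _]|[e _]]] //; move: e; simpl; lia. Qed.

Lemma mlex_sub e (k : 'I_n) : e k != 0%N -> mlex_gt e (msub e (meps k)).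
Proof.
move=> ek; exists k; rewrite msubE mepsE eqxx; split; first by lia.
by move=> t tk; rewrite msubE mepsE; case: eqP => [e'|]; [rewrite e' ltnn in tk|rewrite subn0].
Qed.

Lemma mlex_trans a b e : mlex_gt a b -> mlex_gt b e -> mlex_gt a e.
Proof.
case=> k1 [h1 e1] [k2 [h2 e2]].
case: (ltngtP k1 k2) => [lt|gt|eq].
- exists k1; split; first by rewrite -e2.
  by move=> t tk; rewrite e1 // e2 //; apply: ltn_trans lt.
- exists k2; split; first by rewrite e1.
  by move=> t tk; rewrite e1 ?e2 //; apply: ltn_trans gt.
- have kk : k1 = k2 by apply: val_inj.
  subst k2; exists k1; split; first by apply: ltn_trans h1.
  by move=> t tk; rewrite e1 ?e2.
Qed.

Lemma mlex_subsub a b (k : 'I_n) : mlex_gt a b -> a k != 0%N -> b k != 0%N ->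
  mlex_gt (msub a (meps k)) (msub b (meps k)).
Proof.
case=> k0 [h e] ak bk; exists k0; rewrite !msubE !mepsE; split.
  case: eqP => [eq|_]; last by rewrite !subn0.
  by move: ak bk h; rewrite -eq; lia.
by move=> t tk; rewrite !msubE e.
Qed.


Definition fJ (p : midx n * midx n) (k : 'I_n) := (msub p.1 (meps k), p.2).
Definition fI (p : midx n * midx n) (k : 'I_n) := (p.1, msub p.2 (meps k)).
Definition AJ (cJ : 'I_n -> CC) (p : midx n * midx n) (k : 'I_n) := ((p.1 k)%:R * cJ k)%R.
Definition AI (cI : 'I_n -> CC) (p : midx n * midx n) (k : 'I_n) := ((p.2 k)%:R * cI k)%R.

Lemma mweight_zero : mweight (mzero n) = 0%N.
Proof. by rewrite /mweight big1 // => t _; rewrite ffunE muln0. Qed.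

Lemma pW_le {p d} : p = d \/ pair_gt d p -> (W p <= W d)%N.
Proof. by case=> [->//|/pair_W]. Qed.

Lemma part1J (j i : midx n) (r : 'I_n) p (k : 'I_n) :
  j r != 0%N -> (p = (j, i) \/ pair_gt (j, i) p) -> p.1 k != 0%N -> (k <= r)%N ->
  pair_gt (msub j (meps r), i) (fJ p k) \/ (p = (j, i) /\ k = r).
Proof.
move=> jr hp pk kr.
have Wp := pW_le hp.
have W1 := mweight_sub pk.
have W2 := mweight_sub jr.
have kn := ltn_ord k; have rn := ltn_ord r.
rewrite /= in Wp.
case: (ltnP (W (fJ p k)) (W (msub j (meps r), i))) => hW; first by left; left.
rewrite /= in hW.
have kr' : k = r by apply: val_inj => /=; lia.
subst k.
case: hp => [->|hgt]; first by right.
case: hgt => [/= hlt|[[/= he hl]|[/= he [h2 hl]]]]; first by lia.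
  by left; right; left; split => //=; lia.
left; right; right; split => /=; first by lia.
split => //; apply: mlex_subsub => //.
Qed.

Lemma part1I (j i : midx n) (r : 'I_n) p (k : 'I_n) :
  j r != 0%N -> (p = (j, i) \/ pair_gt (j, i) p) -> p.2 k != 0%N -> (k <= r)%N ->
  pair_gt (msub j (meps r), i) (fI p k).
Proof.
move=> jr hp pk kr.
have Wp := pW_le hp.
have W1 := mweight_sub pk.
have W2 := mweight_sub jr.
have kn := ltn_ord k; have rn := ltn_ord r.
rewrite /= in Wp.
case: (ltnP (W (fI p k)) (W (msub j (meps r), i))) => hW; first by left.
rewrite /= in hW.
have kr' : k = r by apply: val_inj => /=; lia.
subst k.
right; left; split => /=; first by lia.
case: hp => [ep|hgt].
  by subst p; apply: mlex_sub.
case: hgt => [/= hlt|[[/= he hl]|[/= he [h2 hl]]]]; first by lia.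
  exact: (mlex_trans hl (@mlex_sub p.2 r pk)).
by rewrite -h2; apply: mlex_sub; rewrite h2.
Qed.

Lemma part2C (i a b : midx n) (s : 'I_n) :
  mlex_gt i b -> (forall t : 'I_n, (s < t)%N -> i t = 0%N) -> i s != 0%N -> a s != 0%N ->
  (mweight a + mweight b)%N = mweight i ->
  mlex_gt (msub i (meps s)) b \/ (msub a (meps s) = mzero n /\ b = msub i (meps s)).
Proof.
case=> k0 [h e] hi is0 as0 hw.
have k0s : (k0 <= s)%N.
  by rewrite leqNgt; apply/negP => /hi ik; rewrite ik in h.
case: (ltnP k0 s) => k0s'.
  left; exists k0; rewrite !msubE !mepsE.
  have /negbTE -> : k0 != s by apply/eqP => eq; rewrite eq ltnn in k0s'.
  split; first by rewrite subn0.
  move=> t tk; rewrite msubE mepsE e //.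
  have /negbTE -> : t != s; last by rewrite subn0.
  by apply/eqP => eq; rewrite eq in tk; have := ltn_trans tk k0s'; rewrite ltnn.
have ek : k0 = s by apply: val_inj => /=; lia.
subst k0.
case: (ltnP (b s) (i s - 1)) => bs.
  left; exists s; rewrite msubE mepsE eqxx; split => // t ts.
  rewrite msubE mepsE e //.
  have /negbTE -> : t != s by apply/eqP => eq; rewrite eq ltnn in ts.
  by rewrite subn0.
right.
have le : forall t, (msub i (meps s) t <= b t)%N.
  move=> t; rewrite msubE mepsE; case: (ltngtP t s) => ts.
  - have /negbTE -> : t != s by apply/eqP => eq; rewrite eq ltnn in ts.
    by rewrite subn0 e.
  - by rewrite hi.
  - have -> : t = s by apply: val_inj.
    rewrite eqxx; lia.
have Wb := mweight_le le.
have Wa := mweight_sub as0.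
have Wi := mweight_sub is0.
have z1 : mweight (msub a (meps s)) = 0%N by lia.
have z2 : mweight (msub b (msub i (meps s))) = 0%N by lia.
split; first exact: mweight0.
apply/ffunP => t; have := le t.
move: (mweight0 z2) => /ffunP /(_ t); rewrite !ffunE.
case: (t == s) => /= h1 h2; lia.
Qed.

Lemma part2J (i : midx n) (s : 'I_n) p (k : 'I_n) :
  i s != 0%N -> (forall t : 'I_n, (s < t)%N -> i t = 0%N) ->
  (p = (mzero n, i) \/ pair_gt (mzero n, i) p) -> p.1 k != 0%N -> (k <= s)%N ->
  pair_gt (mzero n, msub i (meps s)) (fJ p k) \/
  (p = (meps s, msub i (meps s)) /\ k = s).
Proof.
move=> is0 hi hp pk ks.
have Wp := pW_le hp.
have W1 := mweight_sub pk.
have W2 := mweight_sub is0.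
have Z := mweight_zero.
have kn := ltn_ord k; have sn := ltn_ord s.
rewrite /= in Wp.
case: (ltnP (W (fJ p k)) (W (mzero n, msub i (meps s)))) => hW; first by left; left.
rewrite /= in hW.
have kr' : k = s by apply: val_inj => /=; lia.
subst k.
case: hp => [ep|hgt]; first by rewrite ep /= ffunE in pk.
case: hgt => [/= hlt|[[/= he hl]|[/= he [h2 hl]]]]; first by lia.
  have he' : (mweight p.1 + mweight p.2)%N = mweight i by lia.
  case: (part2C hl hi is0 pk he') => [hl'|[h1 h2]].
    by left; right; left; split => //=; lia.
  right; split => //; case: p {Wp W1 hW he he' hl pk h1 h2} (h1) (h2) (pk) => p1 p2 /= h1 -> pk.
  congr pair; apply/ffunP => t; move/ffunP: h1 => /(_ t); rewrite !ffunE.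
  case: eqP => [->|_] /= hh; move: pk; rewrite ?hh; lia.
by case: hl => k0 []; rewrite ffunE.
Qed.

Lemma part2I (i : midx n) (s : 'I_n) p (k : 'I_n) :
  i s != 0%N -> (forall t : 'I_n, (s < t)%N -> i t = 0%N) ->
  (p = (mzero n, i) \/ pair_gt (mzero n, i) p) -> p.2 k != 0%N -> (k <= s)%N ->
  pair_gt (mzero n, msub i (meps s)) (fI p k) \/ (p = (mzero n, i) /\ k = s).
Proof.
move=> is0 hi hp pk ks.
have Wp := pW_le hp.
have W1 := mweight_sub pk.
have W2 := mweight_sub is0.
have Z := mweight_zero.
have kn := ltn_ord k; have sn := ltn_ord s.
rewrite /= in Wp.
case: (ltnP (W (fI p k)) (W (mzero n, msub i (meps s)))) => hW; first by left; left.
rewrite /= in hW.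
have kr' : k = s by apply: val_inj => /=; lia.
subst k.
case: hp => [ep|hgt]; first by right.
case: hgt => [/= hlt|[[/= he hl]|[/= he [h2 hl]]]]; first by lia.
  left; right; left; split => /=; first by lia.
  by apply: mlex_subsub.
by case: hl => k0 []; rewrite ffunE.
Qed.

End Comb.

Local Open Scope ring_scope.
Lemma sum_pick (R : nzRingType) (I : eqType) (s : seq I) (x : I) (a : R) :
  uniq s -> \sum_(q <- s) (x == q)%:R * a = (x \in s)%:R * a.
Proof.
elim: s => [|y s IH] /=; first by rewrite big_nil mul0r.
case/andP=> ys us; rewrite big_cons IH // in_cons.
case: (eqVneq x y) => [->|xy] /=; last by rewrite mul0r add0r.
by rewrite (negbTE ys) mul0r addr0.
Qed.

Lemma sum_pickV (V : lmodType CC) (I : eqType) (s : seq I) (x : I) (a : CC) (g : I -> V) :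
  uniq s -> x \in s -> \sum_(q <- s) ((x == q)%:R * a) *: g q = a *: g x.
Proof.
move=> us xs; rewrite (bigD1_seq x) //= eqxx mul1r big1 ?addr0 //.
by move=> q qx; rewrite eq_sym (negbTE qx) mul0r scale0r.
Qed.

Section Img.
Variables (n : nat) (V : lmodType CC) (rho : gbasis -> {linear V -> V}) (w0 : V).
Variables (T : V -> V) (cJ cI : 'I_n -> CC).
Hypothesis hTlin : forall (a : CC) u v, T (a *: u + v) = a *: T u + T v.


Hypothesis hTmono : forall p, T (mono rho w0 p) =
  \sum_(k <- enum 'I_n) AJ cJ p k *: mono rho w0 (fJ p k) +
  \sum_(k <- enum 'I_n) AI cI p k *: mono rho w0 (fI p k).

Lemma T0 : T 0 = 0.
Proof.
have h := hTlin 1 0 0; rewrite scaler0 addr0 scale1r in h.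
by apply: (@addrI _ (T 0)); rewrite addr0 -h.
Qed.

Lemma T_sum (I : Type) (r : seq I) (g : I -> V) :
  T (\sum_(x <- r) g x) = \sum_(x <- r) T (g x).
Proof.
elim: r => [|x r IH]; first by rewrite !big_nil T0.
by rewrite !big_cons -IH; have := hTlin 1 (g x) (\sum_(y <- r) g y); rewrite !scale1r.
Qed.

Lemma TZ a u : T (a *: u) = a *: T u.
Proof. by rewrite -[a *: u]addr0 hTlin T0 addr0. Qed.

Definition cimg (c : midx n * midx n -> CC) (s : seq (midx n * midx n)) q :=
  \sum_(p <- s) \sum_(k <- enum 'I_n)
     ((fJ p k == q)%:R * (c p * AJ cJ p k) + (fI p k == q)%:R * (c p * AI cI p k)).

Definition simg (s : seq (midx n * midx n)) :=
  undup ([seq fJ p k | p <- s, k <- enum 'I_n] ++ [seq fI p k | p <- s, k <- enum 'I_n]).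

Lemma img_rep w c s : pbw_rep rho w0 w c s ->
  pbw_rep rho w0 (T w) (cimg c s) (simg s).
Proof.
case=> us supp ->; split; first exact: undup_uniq.
  move=> q; apply: contraR => qs; rewrite /cimg big1_seq // => p /= ps.
  rewrite big1_seq // => k /= ks.
  have -> : (fJ p k == q) = false.
    by apply/negP => /eqP e; move: qs; rewrite mem_undup mem_cat -e allpairs_f.
  have -> : (fI p k == q) = false.
    by apply/negP => /eqP e; move: qs; rewrite mem_undup mem_cat -e allpairs_f ?orbT.
  by rewrite !mul0r addr0.
rewrite T_sum.
under eq_bigr do rewrite TZ hTmono scalerDr !scaler_sumr.
rewrite /cimg.
under [RHS]eq_bigr do rewrite !scaler_suml.
rewrite (exchange_big).
apply: eq_big_seq => p ps.
under [RHS]eq_bigr do rewrite scaler_suml.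
rewrite exchange_big -big_split /=.
apply: eq_bigr => k _.
under eq_bigr do rewrite scalerDl.
rewrite big_split /= !sum_pickV ?undup_uniq ?scalerA //.
  by rewrite mem_undup mem_cat allpairs_f ?orbT ?mem_enum.
by rewrite mem_undup mem_cat allpairs_f ?orbT ?mem_enum.
Qed.

End Img.

Local Open Scope ring_scope.
Lemma sum_src (n : nat) (s : seq (midx n * midx n)) (c : midx n * midx n -> CC)
  (f : midx n * midx n -> 'I_n -> midx n * midx n) (A : midx n * midx n -> 'I_n -> CC)
  t p0 k0 :
  uniq s -> (forall p, c p != 0 -> p \in s) -> f p0 k0 = t ->
  (forall p k, p \in s -> c p != 0 -> A p k != 0 -> f p k = t -> p = p0 /\ k = k0) ->
  \sum_(p <- s) \sum_(k <- enum 'I_n) (f p k == t)%:R * (c p * A p k) = c p0 * A p0 k0.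
Proof.
move=> us supp ft H.
transitivity (\sum_(p <- s) (p0 == p)%:R * (c p0 * A p0 k0)).
  apply: eq_big_seq => p ps.
  transitivity (\sum_(k <- enum 'I_n) (p0 == p)%:R * ((k0 == k)%:R * (c p0 * A p0 k0))).
    apply: eq_bigr => k _.
    case: (eqVneq (c p * A p k) 0) => [z|nz].
      rewrite z mulr0; case: (eqVneq p0 p) => [e|]; last by rewrite mul0r.
      case: (eqVneq k0 k) => [e'|]; last by rewrite mul0r mulr0.
      by rewrite -e -e' in z; rewrite z !mulr0.
    have cp : c p != 0 by move: nz; rewrite mulf_eq0 negb_or => /andP[].
    have Ap : A p k != 0 by move: nz; rewrite mulf_eq0 negb_or => /andP[].
    case: (eqVneq (f p k) t) => [e|ne].
      by case: (H p k ps cp Ap e) => -> ->; rewrite !eqxx !mul1r.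
    rewrite mul0r; case: (eqVneq p0 p) => [e|]; last by rewrite mul0r.
    case: (eqVneq k0 k) => [e'|]; last by rewrite mul0r mulr0.
    by rewrite -e -e' ft eqxx in ne.
  by rewrite -mulr_sumr sum_pick ?enum_uniq // mem_enum mul1r.
rewrite sum_pick //; case: (boolP (p0 \in s)) => [_|nin]; first by rewrite mul1r.
rewrite mul0r; apply/esym/eqP; rewrite mulf_eq0; apply/orP; left.
by apply: contraR nin => /supp.
Qed.

Lemma sum_src0 (n : nat) (s : seq (midx n * midx n)) (c : midx n * midx n -> CC)
  (f : midx n * midx n -> 'I_n -> midx n * midx n) (A : midx n * midx n -> 'I_n -> CC) t :
  (forall p k, p \in s -> c p != 0 -> A p k != 0 -> f p k <> t) ->
  \sum_(p <- s) \sum_(k <- enum 'I_n) (f p k == t)%:R * (c p * A p k) = 0.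
Proof.
move=> H; rewrite big1_seq // => p /= ps; rewrite big1 // => k _.
case: (eqVneq (c p * A p k) 0) => [->|nz]; first by rewrite mulr0.
have cp : c p != 0 by move: nz; rewrite mulf_eq0 negb_or => /andP[].
have Ap : A p k != 0 by move: nz; rewrite mulf_eq0 negb_or => /andP[].
by case: eqP => [/(H p k ps cp Ap)|] //; rewrite mul0r.
Qed.

Lemma cimg_split n (cJ cI : 'I_n -> CC) c s t :
  cimg cJ cI c s t =
  \sum_(p <- s) \sum_(k <- enum 'I_n) (fJ p k == t)%:R * (c p * AJ cJ p k) +
  \sum_(p <- s) \sum_(k <- enum 'I_n) (fI p k == t)%:R * (c p * AI cI p k).
Proof. by rewrite /cimg -big_split; apply: eq_bigr => p _; rewrite -big_split. Qed.

Lemma cimg0 n (cJ cI : 'I_n -> CC) c s q :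
  (forall p k, p \in s -> c p != 0 ->
     (fJ p k = q -> AJ cJ p k = 0) /\ (fI p k = q -> AI cI p k = 0)) ->
  cimg cJ cI c s q = 0.
Proof.
move=> H; rewrite /cimg big1_seq // => p /= ps; rewrite big1 // => k _.
case: (eqVneq (c p) 0) => [->|cp]; first by rewrite !mul0r !mulr0 addr0.
case: (H p k ps cp) => h1 h2.
by rewrite -!/(is_true _); case: eqP => [/h1 ->|]; case: eqP => [/h2 ->|];
  rewrite ?mulr0 ?mul0r ?addr0.
Qed.

Section Main.
Variables (m n : nat) (hn : (0 < n)%N) (hmn : (n <= m)%N) (psi : gbasis -> CC)
  (hpsi : whittaker m n psi) (V : lmodType CC) (rho : gbasis -> {linear V -> V})
  (hrho : is_rep_m0 m rho) (w0 : V) (hw0 : forall x, inG m n x -> rho x w0 = psi x *: w0)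
  (hJtop : psi (gJ (Posz (m + n - 1))) != 0) (hItop : psi (gI (Posz (m + n - 1))) != 0).

Definition XJ (k : 'I_n) : {linear V -> V} := rho (gJ (Posz k)).
Definition XI (k : 'I_n) : {linear V -> V} := rho (gI (Posz k)).
Definition Good (v : V) := forall l : int, (Posz n <= l) ->
  rho (gJ l) v = psi (gJ l) *: v /\ rho (gI l) v = psi (gI l) *: v.

Lemma comm_nil x y v : inG m 0 x -> inG m 0 y -> gbr x y = [::] ->
  rho x (rho y v) = rho y (rho x v).
Proof.
move=> hx hy e; have := hrho hx hy v; rewrite e big_nil => /eqP.
by rewrite subr_eq0 => /eqP.
Qed.

Lemma Good_XJ k v : Good v -> Good (XJ k v).
Proof.
move=> G l hl; have l0 : inG m 0 (gJ l) by rewrite /=; lia.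
have l0' : inG m 0 (gI l) by rewrite /=; lia.
have k0 : inG m 0 (gJ (Posz k)) by [].
case: (G l hl) => h1 h2.
by rewrite /XJ !(@comm_nil _ (gJ (Posz k))) // h1 h2 !linearZ.
Qed.

Lemma Good_XI k v : Good v -> Good (XI k v).
Proof.
move=> G l hl; have l0 : inG m 0 (gJ l) by rewrite /=; lia.
have l0' : inG m 0 (gI l) by rewrite /=; lia.
have k0 : inG m 0 (gI (Posz k)) by [].
case: (G l hl) => h1 h2.
by rewrite /XI !(@comm_nil _ (gI (Posz k))) // h1 h2 !linearZ.
Qed.

Lemma Good_w0 : Good w0.
Proof. by move=> l hl; rewrite !hw0. Qed.

Lemma psiJ0 (l : int) : Posz (m + n) <= l -> psi (gJ l) = 0.
Proof.
move=> hl.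
have h := hpsi (x := gH (Posz m)) (y := gJ (l - Posz m)).
have : inG m n (gH (Posz m)) by rewrite /=.
have : inG m n (gJ (l - Posz m)) by rewrite /=; lia.
move=> a b; move: (h b a); rewrite /= big_cons big_nil addr0 /=.
by rewrite addrC subrK mulN1r => /eqP; rewrite oppr_eq0 => /eqP.
Qed.

Lemma psiI0 (l : int) : Posz (m + n) <= l -> psi (gI l) = 0.
Proof.
move=> hl.
have h := hpsi (x := gH (Posz m)) (y := gI (l - Posz m)).
have : inG m n (gH (Posz m)) by rewrite /=.
have : inG m n (gI (l - Posz m)) by rewrite /=; lia.
move=> a b; move: (h b a); rewrite /= big_cons big_nil addr0 /=.
by rewrite addrC subrK mul1r.
Qed.

Lemma T_step x y c z v : inG m 0 x -> inG m 0 y -> gbr x y = [:: (c, z)] ->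
  rho z v = psi z *: v ->
  rho x (rho y v) - psi x *: rho y v = rho y (rho x v - psi x *: v) + (c * psi z) *: v.
Proof.
move=> hx hy e hz; have := hrho hx hy v; rewrite e big_cons big_nil addr0 /= hz scalerA.
move/eqP; rewrite subr_eq => /eqP ->.
rewrite linearB linearZ /=.
by rewrite linearZ /= scalerN [RHS]addrC addrA.
Qed.

Section T.
Variable x : gbasis.
Hypothesis hx : inG m n x.
Definition T v := rho x v - psi x *: v.

Lemma hTlin (a : CC) u v : T (a *: u + v) = a *: T u + T v.
Proof.
rewrite /T linearD linearZ /= scalerDr scalerBr !scalerA mulrC.
by rewrite opprD addrACA.
Qed.

Lemma Tw0 : T w0 = 0.
Proof. by rewrite /T hw0 // subrr. Qed.

Variables (cJ cI : 'I_n -> CC).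
Hypothesis hTJ : forall k v, Good v -> T (XJ k v) = XJ k (T v) + cJ k *: v.
Hypothesis hTI : forall k v, Good v -> T (XI k v) = XI k (T v) + cI k *: v.

Lemma hTmono p : T (mono rho w0 p) =
  \sum_(k <- enum 'I_n) AJ cJ p k *: mono rho w0 (fJ p k) +
  \sum_(k <- enum 'I_n) AI cI p k *: mono rho w0 (fI p k).
Proof.
have E : forall q : midx n * midx n, mono rho w0 q = Fop XJ q.1 (enum 'I_n) (Fop XI q.2 (enum 'I_n) w0).
  by [].
rewrite !E.
have Gu : Good (Fop XI p.2 (enum 'I_n) w0).
  by apply: FopG Good_w0 => k v; apply: Good_XI.
rewrite (@Fop_T _ _ T Good XJ cJ Good_XJ hTJ) ?enum_uniq //.
rewrite (@Fop_T _ _ T Good XI cI Good_XI hTI) ?enum_uniq ?Good_w0 //.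
rewrite Tw0 Fop0 add0r Fop_sum addrC; congr (_ + _).
  by apply: eq_bigr => k _; rewrite FopZ.
exact: Good_w0.
Qed.

End T.

Lemma src_of (c : midx n * midx n -> CC) d :
  (forall p, c p != 0 -> p <> d -> pair_gt d p) ->
  forall p, c p != 0 -> p = d \/ pair_gt d p.
Proof.
move=> hmax p cp; case: (eqVneq p d) => [->|ne]; first by left.
by right; apply: hmax => // e; rewrite e eqxx in ne.
Qed.

Lemma part1 (w : V) (j i : midx n) (hdeg : is_deg rho w0 w (j, i)) (r : 'I_n)
  (jr : j r != 0%N) :
  let x := gH (Posz (m + n - 1 - r)) in
  is_deg rho w0 (rho x w - psi x *: w) (msub j (meps r), i).
Proof.
move=> x.
set a := (m + n - 1 - r)%N.
have rn := ltn_ord r.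
have hx : inG m n x by rewrite /x /=; lia.
have hx0 : inG m 0 x by rewrite /x /=; lia.
pose cJ := fun k : 'I_n => -1 * psi (gJ (Posz a + Posz k)).
pose cI := fun k : 'I_n => 1 * psi (gI (Posz a + Posz k)).
have hTJ : forall k v, Good v -> T x (XJ k v) = XJ k (T x v) + cJ k *: v.
  move=> k v G; rewrite /T /XJ; apply: T_step => //.
  by case: (G (Posz a + Posz k)) => //; lia.
have hTI : forall k v, Good v -> T x (XI k v) = XI k (T x v) + cI k *: v.
  move=> k v G; rewrite /T /XI; apply: T_step => //.
  by case: (G (Posz a + Posz k)) => //; lia.
case: hdeg => c [s [rep [cd hmax]]].
have rep' := img_rep (@hTlin x) (hTmono hx hTJ hTI) rep.
exists (cimg cJ cI c s), (simg s); split; first exact: rep'.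
case: rep => us supp _.
have src := src_of hmax.
have AJnz : forall p k, AJ cJ p k != 0 -> p.1 k != 0%N /\ (k <= r)%N.
  move=> p k; rewrite /AJ /cJ; case: (eqVneq (p.1 k) 0%N) => [->|pk]; first by rewrite mul0r eqxx.
  case: (leqP k r) => kr //; rewrite psiJ0 ?mulr0 ?eqxx //; lia.
have AInz : forall p k, AI cI p k != 0 -> p.2 k != 0%N /\ (k <= r)%N.
  move=> p k; rewrite /AI /cI; case: (eqVneq (p.2 k) 0%N) => [->|pk]; first by rewrite mul0r eqxx.
  case: (leqP k r) => kr //; rewrite psiI0 ?mulr0 ?eqxx //; lia.
split.
  rewrite cimg_split (@sum_src _ _ _ _ _ _ (j, i) r) //; last first.
    move=> p k ps cp Ap e; case: (AJnz p k Ap) => pk kr.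
    case: (part1J jr (src p cp) pk kr) => [|//]; rewrite e => /pair_irr //.
  rewrite sum_src0 ?addr0; last first.
    move=> p k ps cp Ap e; case: (AInz p k Ap) => pk kr.
    by have := part1I jr (src p cp) pk kr; rewrite e => /pair_irr.
  rewrite /AJ /cJ /= mulf_neq0 // mulf_neq0 ?pnatr_eq0 // mulf_neq0 ?oppr_eq0 ?oner_eq0 //.
  by have -> : Posz a + Posz r = Posz (m + n - 1) by rewrite /a; lia.
move=> q cq qt; apply: NNPP => npg.
move/eqP: cq; apply; apply: cimg0 => p k ps cp; split => e.
  apply/eqP; apply: contraT => Ap; case: (AJnz p k Ap) => pk kr.
  case: (part1J jr (src p cp) pk kr) => [|[e1 e2]]; first by rewrite e.
  by exfalso; apply: qt; rewrite -e e1 e2.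
apply/eqP; apply: contraT => Ap; case: (AInz p k Ap) => pk kr.
by exfalso; apply: npg; rewrite -e; exact: (part1I jr (src p cp) pk kr).
Qed.

Lemma deg2 x (cJ cI : 'I_n -> CC) (c : midx n * midx n -> CC) s w (i : midx n) (s0 : 'I_n) :
  inG m n x ->
  (forall k v, Good v -> T x (XJ k v) = XJ k (T x v) + cJ k *: v) ->
  (forall k v, Good v -> T x (XI k v) = XI k (T x v) + cI k *: v) ->
  (forall p k, AJ cJ p k != 0 -> p.1 k != 0%N /\ (k <= s0)%N) ->
  (forall p k, AI cI p k != 0 -> p.2 k != 0%N /\ (k <= s0)%N) ->
  i s0 != 0%N -> (forall k : 'I_n, (s0 < k)%N -> i k = 0%N) ->
  pbw_rep rho w0 w c s ->
  (forall p, c p != 0 -> p <> (mzero n, i) -> pair_gt (mzero n, i) p) ->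
  c (meps s0, msub i (meps s0)) * AJ cJ (meps s0, msub i (meps s0)) s0 +
  c (mzero n, i) * AI cI (mzero n, i) s0 != 0 ->
  is_deg rho w0 (T x w) (mzero n, msub i (meps s0)).
Proof.
move=> hx hTJ hTI AJnz AInz is0 hi rep hmax nz.
have rep' := img_rep (@hTlin x) (hTmono hx hTJ hTI) rep.
exists (cimg cJ cI c s), (simg s); split; first exact: rep'.
case: rep => us supp _.
have src := src_of hmax.
split.
  rewrite cimg_split (@sum_src _ _ _ _ _ _ (meps s0, msub i (meps s0)) s0) //; last first.
      move=> p k ps cp Ap e; case: (AJnz p k Ap) => pk kr.
      case: (part2J is0 hi (src p cp) pk kr) => [|//]; rewrite e => /pair_irr //.
    rewrite /fJ /=; congr pair; apply/ffunP => t; rewrite !ffunE; lia.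
  rewrite (@sum_src _ _ _ _ _ _ (mzero n, i) s0) //.
  move=> p k ps cp Ap e; case: (AInz p k Ap) => pk kr.
  case: (part2I is0 hi (src p cp) pk kr) => [|//]; rewrite e => /pair_irr //.
move=> q cq qt; apply: NNPP => npg.
move/eqP: cq; apply; apply: cimg0 => p k ps cp; split => e.
  apply/eqP; apply: contraT => Ap; case: (AJnz p k Ap) => pk kr.
  case: (part2J is0 hi (src p cp) pk kr) => [|[e1 e2]]; first by rewrite e.
  exfalso; apply: qt; rewrite -e e1 e2 /fJ /=; congr pair.
  by apply/ffunP => t; rewrite !ffunE; lia.
apply/eqP; apply: contraT => Ap; case: (AInz p k Ap) => pk kr.
case: (part2I is0 hi (src p cp) pk kr) => [|[e1 e2]]; first by rewrite e.
by exfalso; apply: qt; rewrite -e e1 e2.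
Qed.

Lemma part2 (w : V) (i : midx n) (hdeg : is_deg rho w0 w (mzero n, i)) (s0 : 'I_n)
  (is0 : i s0 != 0%N) (hi : forall k : 'I_n, (s0 < k)%N -> i k = 0%N) :
  let xH := gH (Posz (m + n - 1 - s0)) in
  let xL := gL (Posz (m + n - 1 - s0)) in
  is_deg rho w0 (rho xH w - psi xH *: w) (mzero n, msub i (meps s0))
  \/ is_deg rho w0 (rho xL w - psi xL *: w) (mzero n, msub i (meps s0)).
Proof.
move=> xH xL.
set a := (m + n - 1 - s0)%N.
have rn := ltn_ord s0.
have hxH : inG m n xH by rewrite /xH /=; lia.
have hxH0 : inG m 0 xH by rewrite /xH /=; lia.
have hxL : inG m n xL by rewrite /xL /=; lia.
have hxL0 : inG m 0 xL by rewrite /xL /=; lia.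
pose cJH := fun k : 'I_n => -1 * psi (gJ (Posz a + Posz k)).
pose cIH := fun k : 'I_n => 1 * psi (gI (Posz a + Posz k)).
pose cJL := fun k : 'I_n => (Posz k - Posz a)%:~R * psi (gJ (Posz a + Posz k)).
pose cIL := fun k : 'I_n => (Posz k - Posz a)%:~R * psi (gI (Posz a + Posz k)).
have hTJH : forall k v, Good v -> T xH (XJ k v) = XJ k (T xH v) + cJH k *: v.
  move=> k v G; rewrite /T /XJ; apply: T_step => //.
  by case: (G (Posz a + Posz k)) => //; lia.
have hTIH : forall k v, Good v -> T xH (XI k v) = XI k (T xH v) + cIH k *: v.
  move=> k v G; rewrite /T /XI; apply: T_step => //.
  by case: (G (Posz a + Posz k)) => //; lia.
have hTJL : forall k v, Good v -> T xL (XJ k v) = XJ k (T xL v) + cJL k *: v.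
  move=> k v G; rewrite /T /XJ; apply: T_step => //.
  by case: (G (Posz a + Posz k)) => //; lia.
have hTIL : forall k v, Good v -> T xL (XI k v) = XI k (T xL v) + cIL k *: v.
  move=> k v G; rewrite /T /XI; apply: T_step => //.
  by case: (G (Posz a + Posz k)) => //; lia.
have nzJ : forall (z : 'I_n -> CC) p k, AJ (fun k => z k * psi (gJ (Posz a + Posz k))) p k != 0 ->
    p.1 k != 0%N /\ (k <= s0)%N.
  move=> z p k; rewrite /AJ; case: (eqVneq (p.1 k) 0%N) => [->|pk]; first by rewrite mul0r eqxx.
  case: (leqP k s0) => kr //; rewrite psiJ0 ?mulr0 ?eqxx //; lia.
have nzI : forall (z : 'I_n -> CC) p k, AI (fun k => z k * psi (gI (Posz a + Posz k))) p k != 0 ->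
    p.2 k != 0%N /\ (k <= s0)%N.
  move=> z p k; rewrite /AI; case: (eqVneq (p.2 k) 0%N) => [->|pk]; first by rewrite mul0r eqxx.
  case: (leqP k s0) => kr //; rewrite psiI0 ?mulr0 ?eqxx //; lia.
case: hdeg => c [s [rep [cd hmax]]].
have top : Posz a + Posz s0 = Posz (m + n - 1) by rewrite /a; lia.
set U := c (meps s0, msub i (meps s0)) * psi (gJ (Posz (m + n - 1))).
set Vv := c (mzero n, i) * (i s0)%:R * psi (gI (Posz (m + n - 1))).
have Vnz : Vv != 0 by rewrite /Vv !mulf_neq0 // pnatr_eq0.
set z : CC := (Posz s0 - Posz a)%:~R.
have znz : z != 0.
  by rewrite /z intr_eq0 subr_eq0; apply/negP => /eqP h; lia.
have eH : c (meps s0, msub i (meps s0)) * AJ cJH (meps s0, msub i (meps s0)) s0 +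
  c (mzero n, i) * AI cIH (mzero n, i) s0 = Vv - U.
  rewrite /AJ /AI /cJH /cIH /= top ffunE eqxx /= /U /Vv; ring.
have eL : c (meps s0, msub i (meps s0)) * AJ cJL (meps s0, msub i (meps s0)) s0 +
  c (mzero n, i) * AI cIL (mzero n, i) s0 = z * (U + Vv).
  rewrite /AJ /AI /cJL /cIL /= top ffunE eqxx /= /U /Vv -/z; ring.
case: (eqVneq (Vv - U) 0) => [h|h].
  right; apply: (@deg2 xL cJL cIL c s w i s0) => //.
  - exact: (nzJ (fun k => (Posz k - Posz a)%:~R)).
  - exact: (nzI (fun k => (Posz k - Posz a)%:~R)).
  rewrite eL.
  have -> : U = Vv by apply/eqP; rewrite eq_sym -subr_eq0 h.
  rewrite mulf_neq0 // -mulr2n mulrn_eq0 negb_or /= Vnz //.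
left; apply: (@deg2 xH cJH cIH c s w i s0) => //.
- exact: (nzJ (fun k => -1)).
- exact: (nzI (fun k => 1)).
by rewrite eH.
Qed.

End Main.

Theorem lemma3p2 (m n : nat) (hn : (0 < n)%N) (hmn : (n <= m)%N)
  (psi : gbasis -> CC) (hpsi : whittaker m n psi)
  (hIJ : psi (gI (Posz (m + n - 1))) * psi (gJ (Posz (m + n - 1))) != 0)
  (V : lmodType CC) (rho : gbasis -> {linear V -> V}) (hrho : is_rep_m0 m rho)
  (w0 : V) (hw0 : forall x, inG m n x -> rho x w0 = psi x *: w0)
  (hpbw : pbw_basis n rho w0)
  (w : V) (hw : ~ exists a : CC, w = a *: w0)
  (j i : midx n) (hdeg : is_deg rho w0 w (j, i)) :
  (forall r : 'I_n, j r != 0%N -> (forall k : 'I_n, (k < r)%N -> j k = 0%N) ->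
     let x := gH (Posz (m + n - 1 - r)) in
     is_deg rho w0 (rho x w - psi x *: w) (msub j (meps r), i))
  /\
  (j = mzero n -> forall s : 'I_n, i s != 0%N ->
     (forall k : 'I_n, (s < k)%N -> i k = 0%N) ->
     let xH := gH (Posz (m + n - 1 - s)) in
     let xL := gL (Posz (m + n - 1 - s)) in
     is_deg rho w0 (rho xH w - psi xH *: w) (mzero n, msub i (meps s))
     \/ is_deg rho w0 (rho xL w - psi xL *: w) (mzero n, msub i (meps s))).

Proof.
have hJ : psi (gJ (Posz (m + n - 1))) != 0 by move: hIJ; rewrite mulf_eq0 negb_or => /andP[].
have hI : psi (gI (Posz (m + n - 1))) != 0 by move: hIJ; rewrite mulf_eq0 negb_or => /andP[].
split.
  move=> r jr _; exact: (part1 hn hmn hpsi hrho hw0 hJ hI hdeg jr).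
move=> hj s0 is0 hi; subst j.
exact: (part2 hn hmn hpsi hrho hw0 hJ hI hdeg is0 hi).
Qed.
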